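(* Let $\mathbf{\Omega} \in \mathbb{R}^{p \times p}$ be symmetric positive definite, $\mathbf{x} \in \mathbb{R}^p$ and $\epsilon > 0$, and consider $$\sup_{\mathbf{\Delta} \in \mathbb{R}^p,\ \|\mathbf{\Delta}\|_2 \leq \epsilon} (\mathbf{x} + \mathbf{\Delta})^{\intercal}\mathbf{\Omega}(\mathbf{x} + \mathbf{\Delta}).$$ Let $\mu^{\star} \in \mathbb{R}$ be an optimal solution of the one-dimensional problem $$\max_{\mu}\ -\tfrac{1}{2}\mathbf{x}^{\intercal}\mathbf{\Omega}(\mu\mathbf{I} - \mathbf{\Omega})^{-1}\mathbf{\Omega}\mathbf{x} - \tfrac{\mu\epsilon^2}{2} \quad \text{subject to } \mu\mathbf{I} - \mathbf{\Omega} \succeq 0,$$ with $\mu^{\star}\mathbf{I} - \mathbf{\Omega}$ invertible. Then $\mathbf{\Delta}^{\star} = (\mu^{\star}\mathbf{I} - \mathbf{\Omega})^{-1}\mathbf{\Omega}\mathbf{x}$ is an optimal solution of the first problem.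
   Context: $\mathbf{I}$ is the $p \times p$ identity and $\succeq 0$ denotes positive semidefiniteness. *)

(* Defs.v *)
From HB Require Import structures.
From mathcomp Require Import all_boot all_order all_algebra.
From mathcomp Require Import reals.
Set Implicit Arguments. Unset Strict Implicit. Unset Printing Implicit Defensive.
Import Order.TTheory GRing.Theory Num.Theory.
Local Open Scope ring_scope.

Definition quad (R : realType) (p : nat) (A : 'M[R]_p) (v : 'cV[R]_p) : R :=
  (v^T *m A *m v) 0 0.

Definition symmetricmx (R : realType) (p : nat) (A : 'M[R]_p) : Prop := A^T = A.

Definition psdmx (R : realType) (p : nat) (A : 'M[R]_p) : Prop :=
  symmetricmx A /\ forall v : 'cV[R]_p, 0 <= quad A v.

Definition pdmx (R : realType) (p : nat) (A : 'M[R]_p) : Prop :=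
  symmetricmx A /\ forall v : 'cV[R]_p, v != 0 -> 0 < quad A v.

Definition norm2 (R : realType) (p : nat) (v : 'cV[R]_p) : R :=
  Num.sqrt (\sum_(i < p) v i 0 ^+ 2).

(* objective of the one-dimensional (dual) problem, for mu with mu I - Omega invertible *)
Definition dual_obj (R : realType) (p : nat) (Om : 'M[R]_p) (x : 'cV[R]_p) (eps mu : R) : R :=
  - (1/2) * (x^T *m Om *m invmx (mu%:M - Om) *m Om *m x) 0 0 - mu * eps ^+ 2 / 2.

(* Main.v *)
Require Import Defs.
From HB Require Import structures.
From mathcomp Require Import all_boot all_order all_algebra.
From mathcomp Require Import reals.
From mathcomp Require Import ring lra.
Import Order.TTheory GRing.Theory Num.Theory.
Set Implicit Arguments. Unset Strict Implicit.
Local Open Scope ring_scope.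


Definition dot (R : realType) (p : nat) (u v : 'cV[R]_p) : R := (u^T *m v) 0 0.

Lemma dotE (R : realType) (p : nat) (u v : 'cV[R]_p) :
  dot u v = \sum_i u i 0 * v i 0.
Proof. by rewrite /dot mxE; apply: eq_bigr => i _; rewrite mxE. Qed.

Lemma dotC (R : realType) (p : nat) (u v : 'cV[R]_p) : dot u v = dot v u.
Proof. by rewrite !dotE; apply: eq_bigr => i _; rewrite mulrC. Qed.

Lemma dotDl (R : realType) (p : nat) (u u' v : 'cV[R]_p) :
  dot (u + u') v = dot u v + dot u' v.
Proof. by rewrite !dotE -big_split; apply: eq_bigr => i _; rewrite mxE mulrDl. Qed.

Lemma dotDr (R : realType) (p : nat) (u v v' : 'cV[R]_p) :
  dot u (v + v') = dot u v + dot u v'.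
Proof. by rewrite dotC dotDl !(dotC _ u). Qed.

Lemma dotZl (R : realType) (p : nat) (a : R) (u v : 'cV[R]_p) :
  dot (a *: u) v = a * dot u v.
Proof. by rewrite !dotE mulr_sumr; apply: eq_bigr => i _; rewrite mxE mulrA. Qed.

Lemma dotZr (R : realType) (p : nat) (a : R) (u v : 'cV[R]_p) :
  dot u (a *: v) = a * dot u v.
Proof. by rewrite dotC dotZl dotC. Qed.

Lemma dotNl (R : realType) (p : nat) (u v : 'cV[R]_p) : dot (- u) v = - dot u v.
Proof. by rewrite -scaleN1r dotZl mulN1r. Qed.

Lemma dotNr (R : realType) (p : nat) (u v : 'cV[R]_p) : dot u (- v) = - dot u v.
Proof. by rewrite dotC dotNl dotC. Qed.

Lemma dotBl (R : realType) (p : nat) (u u' v : 'cV[R]_p) :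
  dot (u - u') v = dot u v - dot u' v.
Proof. by rewrite dotDl dotNl. Qed.

Lemma dotBr (R : realType) (p : nat) (u v v' : 'cV[R]_p) :
  dot u (v - v') = dot u v - dot u v'.
Proof. by rewrite dotDr dotNr. Qed.

Lemma dot_mull (R : realType) (p : nat) (M : 'M[R]_p) (u v : 'cV[R]_p) :
  dot (M *m u) v = dot u (M^T *m v).
Proof. by rewrite /dot trmx_mul mulmxA. Qed.

Lemma dot_ge0 (R : realType) (p : nat) (u : 'cV[R]_p) : 0 <= dot u u.
Proof. by rewrite dotE; apply: sumr_ge0 => i _; rewrite -expr2 sqr_ge0. Qed.

Lemma dot_eq0 (R : realType) (p : nat) (u : 'cV[R]_p) : dot u u = 0 -> u = 0.
Proof.
rewrite dotE => H; have H2 : \sum_i u i 0 ^+ 2 = 0 by rewrite -[RHS]H; apply: eq_bigr => k _; rewrite expr2.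
apply/matrixP => i j; rewrite (ord1 j) mxE.
have := @psumr_eq0P _ _ xpredT (fun k => u k 0 ^+ 2) (fun k _ => sqr_ge0 _) H2 i isT.
by move/eqP; rewrite expf_eq0 => /eqP.
Qed.

Lemma quadE (R : realType) (p : nat) (A : 'M[R]_p) (v : 'cV[R]_p) :
  quad A v = dot v (A *m v).
Proof. by rewrite /quad /dot mulmxA. Qed.

Lemma norm2E (R : realType) (p : nat) (v : 'cV[R]_p) : norm2 v = Num.sqrt (dot v v).
Proof. by rewrite /norm2 dotE; congr Num.sqrt; apply: eq_bigr => i _; rewrite expr2. Qed.

Lemma scalar_mxB' (R : realType) (p : nat) (a b : R) :
  (a - b)%:M = a%:M - b%:M :> 'M[R]_p.
Proof. by rewrite raddfB. Qed.


Lemma coord_le (R : realType) (p : nat) (v : 'cV[R]_p) j : v j 0 ^+ 2 <= dot v v.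
Proof.
rewrite dotE (bigD1 j) //= -expr2 lerDl; apply: sumr_ge0 => i _; by rewrite -expr2 sqr_ge0.
Qed.

Lemma quad_le (R : realType) (p : nat) (M : 'M[R]_p) (v : 'cV[R]_p) :
  quad M v <= (\sum_k \sum_i `|M i k|) * dot v v.
Proof.
rewrite /quad mxE mulr_suml; apply: ler_sum => k _.
rewrite mxE mulr_suml mulr_suml; apply: ler_sum => i _.
rewrite mxE.
have h1 := coord_le v i; have h2 := coord_le v k.
have hm := normr_ge0 (M i k).
set a := v i 0 in h1 *; set b := v k 0 in h2 *; set m := M i k in hm *.
have : a * m * b <= `|m| * (`|a| * `|b|).
  rewrite -!normrM; apply: (le_trans (ler_norm _)); rewrite !normrM; lra.
have : `|a| * `|b| <= dot v v.
  have : 2 * (`|a| * `|b|) <= a ^+ 2 + b ^+ 2.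
    rewrite -(real_normK (num_real a)) -(real_normK (num_real b)).
    have := sqr_ge0 (`|a| - `|b|); lra.
  lra.
move=> hab hamb.
apply: (le_trans hamb); exact: ler_wpM2l.
Qed.

Lemma quad_sub (R : realType) (p : nat) (A : 'M[R]_p) (u v : 'cV[R]_p) :
  A^T = A ->
  quad A (u - v) = quad A u - 2 * dot u (A *m v) + quad A v.
Proof.
move=> sA; rewrite !quadE mulmxBr dotBl !dotBr.
have -> : dot v (A *m u) = dot u (A *m v) by rewrite dotC dot_mull sA.
ring.
Qed.

Lemma lb_exists (R : realType) (p : nat) (A : 'M[R]_p) :
  psdmx A -> A \in unitmx ->
  exists2 c : R, 0 < c & forall v, c * dot v v <= quad A v.
Proof.
move=> [sA psdA] uA.
set C := invmx A.
set K := (\sum_k \sum_i `|C i k|) + 1.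
have K1 : 1 <= K.
  rewrite /K lerDr; apply: sumr_ge0 => k _; apply: sumr_ge0 => i _; exact: normr_ge0.
have K0 : 0 < K by lra.
exists K^-1; first by rewrite invr_gt0.
move=> v.
set w := C *m v.
have Aw : A *m w = v by rewrite /w /C mulKVmx.
have hd := quad_le C v.
have hm := dot_ge0 v.
have := psdA (K *: v - w).
rewrite quad_sub // Aw [quad A w]quadE Aw dotZl (dotC w v).
have -> : quad A (K *: v) = K ^+ 2 * quad A v.
  by rewrite !quadE -scalemxAr dotZl dotZr mulrA expr2.
have -> : dot v w = quad C v by rewrite quadE.
set a := quad A v; set m := dot v v; set d := quad C v.
move: hd; rewrite -/m -/d => hd.
rewrite -/K in hd.
move=> H.
have : K * (K * a - m) >= 0.
  have : d <= K * m.
    apply: (le_trans hd); by rewrite ler_wpM2r // /K lerDl.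
  move=> h; nra.
rewrite pmulr_rge0 // subr_ge0 => H2.
rewrite mulrC -ler_pdivlMr ?invr_gt0 // invrK mulrC; exact: H2.
Qed.

Lemma unit_of_lb (R : realType) (p : nat) (B : 'M[R]_p) (c : R) :
  B^T = B -> 0 < c -> (forall v, c * dot v v <= quad B v) -> B \in unitmx.
Proof.
move=> sB c0 lb; rewrite unitmxE unitfE; apply/negP => /det0P [v vn0 hv].
have hu : B *m v^T = 0 by rewrite -{1}sB -trmx_mul hv trmx0.
have := lb v^T; rewrite quadE hu.
have -> : dot v^T 0 = 0 by rewrite dotE big1 // => i _; rewrite !mxE mulr0.
move=> h.
have h0 := dot_ge0 v^T.
have : dot v^T v^T = 0.
  apply/eqP; rewrite eq_le h0 andbT.
  by rewrite -(pmulr_rle0 _ c0).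
move/dot_eq0 => /(congr1 trmx); rewrite trmxK trmx0 => e.
by move: vn0; rewrite e eqxx.
Qed.

Lemma inv_bound (R : realType) (p : nat) (B : 'M[R]_p) (c : R) (u : 'cV[R]_p) :
  B^T = B -> 0 < c -> (forall v, c * dot v v <= quad B v) ->
  quad (invmx B) u <= dot u u / c.
Proof.
move=> sB c0 lb.
have uB := unit_of_lb sB c0 lb.
set w := invmx B *m u.
have Bw : B *m w = u by rewrite /w mulKVmx.
have e1 : quad (invmx B) u = dot u w by rewrite quadE.
have h1 := lb w; rewrite quadE Bw (dotC w u) in h1.
have h2 := dot_ge0 (u - c *: w).
rewrite dotBl !dotBr !dotZl !dotZr (dotC w u) in h2.
rewrite e1 ler_pdivlMr //.
set m := dot u w in h1 h2 *; set s := dot u u in h2 *; set ww := dot w w in h1 h2 *.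
have : c * (c * ww) <= c * m by rewrite ler_wpM2l // ltW.
nra.
Qed.

Lemma dual_objE (R : realType) (p : nat) (Om : 'M[R]_p) (x : 'cV[R]_p) (eps mu : R) :
  Om^T = Om ->
  dual_obj Om x eps mu =
  - (1/2) * dot (Om *m x) (invmx (mu%:M - Om) *m (Om *m x)) - mu * eps ^+ 2 / 2.
Proof.
move=> sO; rewrite /dual_obj /dot trmx_mul sO !mulmxA.
done.
Qed.

Lemma resolvent (R : realType) (p : nat) (Om : 'M[R]_p) (b : 'cV[R]_p) (mu t : R) :
  Om^T = Om -> (mu%:M - Om) \in unitmx -> ((mu - t)%:M - Om) \in unitmx ->
  let u := invmx (mu%:M - Om) *m b in
  dot b (invmx ((mu - t)%:M - Om) *m b) - dot b u =
  t * (dot u u + t * quad (invmx ((mu - t)%:M - Om)) u).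
Proof.
move=> sO uA uAt u.
set A := mu%:M - Om; set At := (mu - t)%:M - Om; set Ct := invmx At.
have sA : A^T = A by rewrite /A linearB /= tr_scalar_mx sO.
have eAt : At = A - t%:M by rewrite /At /A raddfB /= addrAC.
have Au : A *m u = b by rewrite /u mulKVmx.
have Atu : At *m u + t *: u = b by rewrite eAt mulmxBl mul_scalar_mx Au subrK.
have uAt2 : At \in unitmx := uAt.
set w := Ct *m b.
have ew : w = u + t *: (Ct *m u).
  by rewrite /w -{1}Atu mulmxDr mulKmx ?uAt2 // -scalemxAr.
have Aw : A *m w = b + t *: w.
  by rewrite /w /Ct -[A](subrK (t%:M)) -eAt mulmxDl mulKVmx // mul_scalar_mx.
rewrite -{1}Au dot_mull sA Aw dotDr dotZr ew dotDr dotZr -/u.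
rewrite -Au dot_mull sA Au quadE.
ring.
Qed.

Lemma real_key (R : realType) (D B c : R) (q : R -> R) :
  0 < c -> 0 <= B ->
  (forall t, t != 0 -> -c <= t -> t <= c -> q t <= B /\ t * (D - t * q t) <= 0) ->
  D = 0.
Proof.
move=> c0 B0 H; apply/eqP; apply/negPn/negP => D0.
have E0 : 0 < `|D| by rewrite normr_gt0.
have B1 : 0 < 2 * (B + 1) by lra.
set d := Num.min c (`|D| / (2 * (B + 1))).
have d0 : 0 < d by rewrite /d lt_min c0 divr_gt0.
have dc : d <= c by rewrite /d ge_min lexx.
have dE : d * (2 * (B + 1)) <= `|D|.
  by rewrite -ler_pdivlMr // /d ge_min lexx orbT.
have dn0 : d != 0 by rewrite gt_eqF.
have dn0' : - d != 0 by rewrite oppr_eq0.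
have [q1B h1] := H d dn0 ltac:(lra) dc.
have [q2B h2] := H (- d) dn0' ltac:(lra) ltac:(lra).
move: h1 h2; set q1 := q d; set q2 := q (- d) => h1 h2.
have e1 : d * q1 <= d * B by rewrite ler_wpM2l // ltW.
have e2 : d * q2 <= d * B by rewrite ler_wpM2l // ltW.
have f1 : D - d * q1 <= 0 by rewrite -(pmulr_rle0 _ d0).
have f2 : 0 <= D + d * q2.
  by move: h2; rewrite mulNr mulNr opprK oppr_le0 pmulr_rge0.
case: (ltrgtP D 0) => hD.
- rewrite ltr0_norm // in dE; nra.
- rewrite gtr0_norm // in dE; nra.
- by rewrite hD eqxx in D0.
Qed.



Lemma quad_shift (R : realType) (p : nat) (A : 'M[R]_p) (t : R) (v : 'cV[R]_p) :
  quad (A - t%:M) v = quad A v - t * dot v v.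
Proof. by rewrite !quadE mulmxBl mul_scalar_mx dotBr dotZr. Qed.

Lemma quad_add (R : realType) (p : nat) (A : 'M[R]_p) (y d : 'cV[R]_p) :
  A^T = A ->
  quad A (y + d) = quad A y + 2 * dot d (A *m y) + quad A d.
Proof.
move=> sA; rewrite !quadE mulmxDr dotDl !dotDr.
have -> : dot y (A *m d) = dot d (A *m y) by rewrite dotC dot_mull sA.
ring.
Qed.

Unset Implicit Arguments. Set Strict Implicit.

Theorem theorem5 (R : realType) (p : nat) (Om : 'M[R]_p) (x : 'cV[R]_p)
  (eps mu_star : R) :
  pdmx Om -> 0 < eps ->
  (* mu_star is feasible, with mu_star I - Omega invertible *)
  psdmx (mu_star%:M - Om) -> (mu_star%:M - Om) \in unitmx ->
  (* mu_star is optimal among feasible mu (where the objective is defined) *)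
  (forall mu : R, psdmx (mu%:M - Om) -> (mu%:M - Om) \in unitmx ->
     dual_obj Om x eps mu <= dual_obj Om x eps mu_star) ->
  let Delta_star := invmx (mu_star%:M - Om) *m Om *m x in
  norm2 Delta_star <= eps /\
  (forall Delta : 'cV[R]_p, norm2 Delta <= eps ->
     quad Om (x + Delta) <= quad Om (x + Delta_star)).
Proof.
move=> [sO pdO] eps0 psdA uA opt Delta_star.
have [c c0 lbA] := lb_exists psdA uA.
set b := Om *m x.
set u := invmx (mu_star%:M - Om) *m b.
have eD : Delta_star = u by rewrite /Delta_star /u /b mulmxA.
rewrite eD.
set A := mu_star%:M - Om.
have sA : A^T = A by rewrite /A linearB /= tr_scalar_mx sO.
set s := dot u u.
have s0 : 0 <= s := dot_ge0 u.
have c20 : 0 < c / 2 by lra.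
have feas : forall t, -(c/2) <= t -> t <= c/2 ->
    [/\ ((mu_star - t)%:M - Om)^T = (mu_star - t)%:M - Om,
        ((mu_star - t)%:M - Om) \in unitmx,
        psdmx ((mu_star - t)%:M - Om) &
        forall v, c / 2 * dot v v <= quad ((mu_star - t)%:M - Om) v].
  move=> t ht1 ht2.
  have eAt : (mu_star - t)%:M - Om = A - t%:M by rewrite /A raddfB /= addrAC.
  have sAt : ((mu_star - t)%:M - Om)^T = (mu_star - t)%:M - Om.
    by rewrite linearB /= tr_scalar_mx sO.
  have lb : forall v, c / 2 * dot v v <= quad ((mu_star - t)%:M - Om) v.
    move=> v; rewrite eAt quad_shift.
    have := lbA v; have := dot_ge0 v; nra.
  split => //.
  - exact: unit_of_lb sAt c20 lb.
  - split => // v; apply: le_trans (lb v).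
    by rewrite mulr_ge0 // ?dot_ge0 // ltW.
have seps : s = eps ^+ 2.
  suff : eps ^+ 2 - s = 0 by move/eqP; rewrite subr_eq0 => /eqP...
  apply: (@real_key R _ (s / (c / 2)) (c / 2)
    (fun t => quad (invmx ((mu_star - t)%:M - Om)) u)) => //.
    by rewrite divr_ge0 // ltW.
  move=> t tn0 ht1 ht2.
  have [sAt uAt psdAt lbt] := feas t ht1 ht2.
  split; first exact: inv_bound.
  have := opt _ psdAt uAt.
  rewrite !dual_objE //.
  have := @resolvent R p Om b mu_star t sO uA uAt; rewrite -/b -/u -/s.
  set h := dot b _; set q := quad _ u => e.
  move=> hle.
  have : h = dot b u + t * (s + t * q) by rewrite -e; ring.
  move=> eh; rewrite eh in hle.
  lra.
have quadA : forall v, quad A v = mu_star * dot v v - quad Om v.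
  by move=> v; rewrite /A quadE mulmxBl mul_scalar_mx dotBr dotZr -quadE.
have quadO : forall v, 0 <= quad Om v.
  move=> v; have [->|vn0] := eqVneq v 0.
    by rewrite /quad mulmx0 mxE.
  exact: ltW (pdO v vn0).
have e20 : 0 < eps ^+ 2 by rewrite exprn_gt0.
have mu0 : 0 <= mu_star.
  rewrite leNgt; apply/negP => mneg.
  have h1 := psdA.2 u; rewrite -/A quadA -/s in h1.
  have h2 := quadO u.
  nra.
split.
  by rewrite norm2E -/s seps sqrtr_sqr gtr0_norm.
move=> Delta hD.
have hDD : dot Delta Delta <= eps ^+ 2.
  by rewrite -(ler_sqrt _ (ltW e20)) sqrtr_sqr gtr0_norm // -norm2E.
have Au : A *m u = b by rewrite /u mulKVmx.
have Oy : Om *m (x + u) = mu_star *: u.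
  rewrite mulmxDr -/b -Au /A mulmxBl mul_scalar_mx; by rewrite subrK.
have eDD : dot Delta Delta = s + 2 * dot (Delta - u) u + dot (Delta - u) (Delta - u).
  by rewrite !dotBl !dotBr (dotC u Delta) /s; ring.
set d := Delta - u.
have -> : x + Delta = (x + u) + d by rewrite /d -addrA (addrC u) subrK.
rewrite (@quad_add _ _ Om _ _ sO) Oy dotZr.
have hA := psdA.2 d; rewrite -/A quadA in hA.
rewrite eDD seps in hDD.
set q := quad Om d in hA *.
have : mu_star * (2 * dot d u + dot d d) <= 0.
  have hx : 2 * dot d u + dot d d <= 0 by move: hDD; rewrite -/d; lra.
  nra.
nra.
Qed.
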